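(* Let $f_1,f_2\in\mathcal{BC}^1_g([a,b],\mathbb F)$. Then $f_1f_2\in\mathcal{BC}^1_g([a,b],\mathbb F)$ if and only if \[(f_1)'_g(t)(f_2)'_g(t)=0\quad\text{for all }t\in((a^*,b)\cap A_g)\setminus H_g,\] where \[A_g=\{t\in\mathbb R: \sup\{s\in [a,b] : g(s)=g(t)\}\in D_g\},\] \[H_g=\{t\in\mathbb R: t\in(s_1,s_2]\text{ for some }s_1,s_2\in D_g\text{ with }(s_1,s_2)\subset C_g\}.\]
   Context: Let $g:\mathbb R\to\mathbb R$ be nondecreasing and left-continuous, $\mathbb F\in\{\mathbb R,\mathbb C\}$. $\Delta g(t)=g(t^+)-g(t)$, $D_g=\{t:\Delta g(t)>0\}$, $C_g=\{t: g\text{ constant on }(t-\varepsilon,t+\varepsilon)\text{ for some }\varepsilon>0\}=\bigcup_{n\in\Lambda}(a_n,b_n)$ (disjoint union of connected components), $N_g^-=\{a_n\}\setminus D_g$, $N_g^+=\{b_n\}\setminus D_g$. Fix $a<b$ with $a\notin N_g^-\cup D_g$ and $b\notin C_g\cup N_g^+\cup D_g$. For $t\in[a,b]$, $t^*=t$ if $t\notin C_g$ and $t^*=b_n$ if $t\in(a_n,b_n)$. The $g$-derivative of $u:[a,b]\to\mathbb F$ at $t$ is $u'_g(t)=\lim_{s\to t}\frac{u(s)-u(t)}{g(s)-g(t)}$ if $t\notin D_g\cup C_g$ and $u'_g(t)=\lim_{s\to t^{*+}}\frac{u(s)-u(t^* )}{g(s)-g(t^* )}$ if $t\in D_g\cup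 C_g$, provided the finite limit exists; limits are over $s\in[a,b]$ with nonzero denominator, and at points of $N_g^+\cup\{a\}$ only the right-hand limit, at points of $N_g^-\cup\{b\}$ only the left-hand limit is taken. A function $u:[a,b]\to\mathbb F$ is $g$-continuous at $t$ if for every $\varepsilon>0$ there is $\delta>0$ with $|u(t)-u(s)|<\varepsilon$ for all $s\in[a,b]$ with $|g(t)-g(s)|<\delta$. $\mathcal{BC}_g([a,b],\mathbb F)$ is the set of bounded functions $[a,b]\to\mathbb F$ that are $g$-continuous at every point of $[a,b]$, and $\mathcal{BC}^1_g([a,b],\mathbb F)$ is the set of $f\in\mathcal{BC}_g([a,b],\mathbb F)$ that are $g$-differentiable at every point of $[a,b]$ with $f'_g\in\mathcal{BC}_g([a,b],\mathbb F)$. *)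

(* Defs.v *)
From mathcomp Require Import all_boot all_order all_algebra.
From mathcomp Require Import all_classical all_reals.
From mathcomp.real_closed Require Export complex.
Set Implicit Arguments. Unset Strict Implicit. Unset Printing Implicit Defensive.
Import Order.TTheory GRing.Theory Num.Theory.
Local Open Scope ring_scope.
Local Open Scope classical_set_scope.

Section Stieltjes.
Variable R : realType.
Implicit Types (g : R -> R) (t s : R).

Definition nondecr g := forall x y, x <= y -> g x <= g y.
Definition left_cont g := forall t (e : R), 0 < e ->
  exists2 d : R, 0 < d & forall s, t - d < s < t -> `|g s - g t| < e.

(* g(t^+) : right limit of the nondecreasing g, i.e. inf of g on ]t,+oo[ *)
Definition gplus g t : R := inf [set g s | s in [set s | t < s]].
Definition Deltag g t : R := gplus g t - g t.
Definition Dg g t : Prop := 0 < Deltag g t.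
Definition Cg g t : Prop :=
  exists2 e : R, 0 < e & forall s, t - e < s < t + e -> g s = g t.
(* left endpoints a_n of connected components (a_n,b_n) of C_g with a_n real *)
Definition left_end g t : Prop :=
  ~ Cg g t /\ exists2 c, t < c & forall s, t < s < c -> Cg g s.
(* right endpoints b_n of connected components (a_n,b_n) of C_g with b_n real *)
Definition right_end g t : Prop :=
  ~ Cg g t /\ exists2 c, c < t & forall s, c < s < t -> Cg g s.
Definition Nminus g t : Prop := left_end g t /\ ~ Dg g t.
Definition Nplus g t : Prop := right_end g t /\ ~ Dg g t.

(* t^* : t if t \notin C_g, b_n if t \in (a_n,b_n) *)
Definition tstar g t : R :=
  if `[< Cg g t >] then sup [set s | t <= s /\ forall r, t <= r <= s -> Cg g r]
  else t.

Definition Ag g (a b : R) t : Prop :=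
  Dg g (sup [set s | a <= s <= b /\ g s = g t]).
Definition Hg g t : Prop :=
  exists s1 s2, [/\ Dg g s1, Dg g s2, (forall r, s1 < r < s2 -> Cg g r)
                  & s1 < t <= s2].

Variables (F : numFieldType) (emb : R -> F).
(* emb is the inclusion R -> F (identity if F = R, x |-> x + 0i if F = C) *)
Implicit Types (u : R -> F).

Definition gderiv_at g (a b : R) u t (L : F) : Prop :=
  ((Dg g t \/ Cg g t) ->
     forall e : F, 0 < e -> exists2 d : R, 0 < d & forall s, a <= s <= b ->
       tstar g t < s < tstar g t + d -> g s != g (tstar g t) ->
       `|(u s - u (tstar g t)) / emb (g s - g (tstar g t)) - L| < e)
  /\
  (~ (Dg g t \/ Cg g t) ->
     forall e : F, 0 < e -> exists2 d : R, 0 < d & forall s, a <= s <= b ->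
       `|s - t| < d -> g s != g t ->
       (Nplus g t \/ t = a -> t < s) ->
       (Nminus g t \/ t = b -> s < t) ->
       `|(u s - u t) / emb (g s - g t) - L| < e).

Definition gdifferentiable_at g a b u t : Prop := exists L, gderiv_at g a b u t L.

(* the g-derivative u'_g (t) (the limit is unique at points of [a,b]) *)
Definition gderiv g a b u t : F := xget 0 [set L | gderiv_at g a b u t L].

Definition gcont_at g (a b : R) u t : Prop :=
  forall e : F, 0 < e -> exists2 d : R, 0 < d & forall s, a <= s <= b ->
    `|g t - g s| < d -> `|u t - u s| < e.

Definition BCg g (a b : R) u : Prop :=
  (exists M : F, forall t, a <= t <= b -> `|u t| <= M)
  /\ (forall t, a <= t <= b -> gcont_at g a b u t).

Definition BC1g g (a b : R) u : Prop :=
  [/\ BCg g a b u,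
      (forall t, a <= t <= b -> gdifferentiable_at g a b u t)
    & BCg g a b (gderiv g a b u)].

End Stieltjes.

(* Main.v *)
Require Import Defs.
From mathcomp Require Import all_boot all_order all_algebra.
From mathcomp Require Import all_classical all_reals.
From mathcomp.real_closed Require Import complex.
From mathcomp Require Import ring lra.
Import Order.TTheory GRing.Theory Num.Theory.
Local Open Scope ring_scope.

Module Aux.
Set Implicit Arguments. Unset Strict Implicit. Unset Printing Implicit Defensive.
Section Lim.
Variables (R : realType) (F : numFieldType).
Definition limP (P : R -> R -> Prop) (h : R -> F) (L : F) :=
  forall e : F, 0 < e -> exists2 d : R, 0 < d & forall s, P d s -> `|h s - L| < e.
Definition monoP (P : R -> R -> Prop) := forall d d' s, d <= d' -> P d s -> P d' s.

Lemma two_deltas (P : R -> R -> Prop) (Q1 Q2 : R -> Prop) : monoP P ->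
  (exists2 d : R, 0 < d & forall s, P d s -> Q1 s) ->
  (exists2 d : R, 0 < d & forall s, P d s -> Q2 s) ->
  exists2 d : R, 0 < d & forall s, P d s -> Q1 s /\ Q2 s.
Proof.
move=> mP [d1 d10 H1] [d2 d20 H2]; exists (Order.min d1 d2).
  by rewrite lt_min d10 d20.
move=> s Ps; split.
  by apply: H1; apply: mP Ps; rewrite ge_min lexx.
by apply: H2; apply: mP Ps; rewrite ge_min lexx orbT.
Qed.
Arguments two_deltas {P Q1 Q2}.

Lemma limP_cst P (c : F) : limP P (fun _ => c) c.
Proof. by move=> e e0; exists 1 => // s _; rewrite subrr normr0. Qed.

Lemma limP_add P h1 h2 L1 L2 : monoP P -> limP P h1 L1 -> limP P h2 L2 ->
  limP P (fun s => h1 s + h2 s) (L1 + L2).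
Proof.
move=> mP H1 H2 e e0.
have e20 : 0 < e / 2%:R by rewrite divr_gt0 // ltr0n.
have [d d0 Hd] := two_deltas mP (H1 _ e20) (H2 _ e20).
exists d => // s /Hd [A B].
rewrite opprD addrACA (le_lt_trans (ler_normD _ _)) //.
by rewrite [e](splitr e) ltrD.
Qed.

Lemma limP_opp P h L : limP P h L -> limP P (fun s => - h s) (- L).
Proof.
move=> H e e0; have [d d0 Hd] := H e e0; exists d => // s /Hd.
by rewrite -opprD normrN.
Qed.

Lemma limP_mul P h1 h2 L1 L2 : monoP P -> limP P h1 L1 -> limP P h2 L2 ->
  limP P (fun s => h1 s * h2 s) (L1 * L2).
Proof.
move=> mP H1 H2 e e0.
set c1 := `|L1| + 1; set c2 := `|L2| + 1.
have c10 : 0 < c1 by rewrite ltr_wpDl.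
have c20 : 0 < c2 by rewrite ltr_wpDl.
have ea : 0 < e / 2%:R / c2 by rewrite !divr_gt0 // ltr0n.
have eb : 0 < e / 2%:R / c1 by rewrite !divr_gt0 // ltr0n.
have [d d0 Hd] := two_deltas mP (H1 _ ea) (two_deltas mP (H2 _ eb) (H2 _ ltr01)).
exists d => // s /Hd [A [B C]].
have -> : h1 s * h2 s - L1 * L2 = (h1 s - L1) * h2 s + L1 * (h2 s - L2).
  by rewrite mulrBl mulrBr addrA subrK.
rewrite (le_lt_trans (ler_normD _ _)) // [e](splitr e) !normrM.
have h2b : `|h2 s| <= c2.
  rewrite -[h2 s](subrK L2) (le_trans (ler_normD _ _)) // addrC /c2 lerD2l.
  exact: ltW.
apply: ler_ltD.
  apply: (@le_trans _ _ (e / 2%:R / c2 * c2)); last by rewrite divfK // gt_eqF.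
  by apply: ler_pM => //; exact: ltW.
apply: (@le_lt_trans _ _ (`|L1| * (e / 2%:R / c1))).
  by apply: ler_wpM2l => //; exact: ltW.
apply: (@lt_le_trans _ _ (c1 * (e / 2%:R / c1))).
  by rewrite ltr_pM2r // /c1 ltrDl.
by rewrite mulrC divfK // gt_eqF.
Qed.

Lemma limP_uniq P h L L' : (forall d, 0 < d -> exists s, P d s) -> monoP P ->
  limP P h L -> limP P h L' -> L = L'.
Proof.
move=> ex mP H1 H2; apply/eqP; rewrite -subr_eq0 -normr_eq0.
apply: contraT => ne.
have e0 : 0 < `|L - L'| / 2%:R.
  by rewrite divr_gt0 // ?ltr0n // lt_neqAle eq_sym ne normr_ge0.
have [d d0 Hd] := two_deltas mP (H1 _ e0) (H2 _ e0).
have [s /Hd [A B]] := ex d d0.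
have H : `|L - L'| <= `|h s - L'| + `|h s - L|.
  have -> : L - L' = (h s - L') - (h s - L) by ring.
  exact: ler_normB.
have := le_lt_trans H (ltrD B A).
by rewrite -splitr ltxx.
Qed.
End Lim.

Unset Implicit Arguments. Set Strict Implicit.
Local Open Scope classical_set_scope.
Section G.
Variables (R : realType) (g : R -> R).
Hypotheses (ndg : nondecr g) (lcg : left_cont g).

Lemma gimg_ne x : [set g s | s in [set s | x < s]] !=set0.
Proof. by exists (g (x + 1)); exists (x + 1) => //=; rewrite ltrDl. Qed.

Lemma gimg_lb x : lbound [set g s | s in [set s | x < s]] (g x).
Proof. by move=> _ [s /= xs <-]; apply: ndg; exact: ltW. Qed.

Lemma gplus_ge x : g x <= gplus g x.
Proof. exact: lb_le_inf (gimg_ne x) (gimg_lb x). Qed.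

Lemma gplus_le x y : x < y -> gplus g x <= g y.
Proof.
move=> xy; apply: (ge_inf (ex_intro _ _ (gimg_lb x))).
by exists y.
Qed.

Lemma gplus_adh x e : 0 < e -> exists2 y, x < y & g y < gplus g x + e.
Proof.
move=> e0; have h : gplus g x < gplus g x + e by rewrite ltrDl.
have [_ [y /= xy <-] H] := inf_lt (gimg_ne x) h; by exists y.
Qed.

Lemma Deltag_ge0 x : 0 <= Deltag g x.
Proof. by rewrite /Deltag subr_ge0 gplus_ge. Qed.

Lemma Cg_ball (t e : R) : (forall s : R, t - e < s < t + e -> g s = g t) ->
  forall s : R, t - e < s < t + e -> Cg g s.
Proof.
move=> H s /andP[h1 h2]; exists (Order.min (s - (t - e)) (t + e - s)).
  by rewrite lt_min !subr_gt0 h1 h2.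
have m1 : Order.min (s - (t - e)) (t + e - s) <= s - (t - e) by rewrite ge_min lexx.
have m2 : Order.min (s - (t - e)) (t + e - s) <= t + e - s by rewrite ge_min lexx orbT.
move: (Order.min _ _) m1 m2 => m m1 m2 r /andP[k1 k2].
rewrite H ?H //; first by rewrite h1 h2.
apply/andP; split; lra.
Qed.

Lemma Cg_eq t s : Cg g t -> Cg g s -> True. Proof. by []. Qed.

Lemma Dg_notC x : Dg g x -> ~ Cg g x.
Proof.
rewrite /Dg /Deltag subr_gt0 => H [e e0 He].
have hs : x - e < x + e / 2%:R < x + e by apply/andP; split; lra.
have : gplus g x <= g (x + e / 2%:R) by apply: gplus_le; lra.
by rewrite He // leNgt H.
Qed.

Lemma left_lim (c s v : R) : c < s -> (forall r : R, c < r < s -> g r = v) -> g s = v.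
Proof.
move=> cs H; apply/eqP; rewrite -subr_eq0 -normr_eq0.
apply: contraT => ne.
have e0 : 0 < `|g s - v| by rewrite lt_neqAle eq_sym ne normr_ge0.
have [d d0 Hd] := lcg s _ e0.
have m0 : 0 < Order.min d (s - c) by rewrite lt_min d0 subr_gt0.
have m1 : Order.min d (s - c) <= d by rewrite ge_min lexx.
have m2 : Order.min d (s - c) <= s - c by rewrite ge_min lexx orbT.
move: (Order.min _ _) m0 m1 m2 => m m0 m1 m2.
have hr : c < s - m / 2%:R < s by apply/andP; split; lra.
have hr2 : s - d < s - m / 2%:R < s by apply/andP; split; lra.
have := Hd _ hr2; rewrite H // distrC.
by rewrite ltxx.
Qed.
Lemma LC (x y : R) : (forall r : R, x < r < y -> Cg g r) ->
  forall r1 r2 : R, x < r1 -> r1 <= r2 -> r2 < y -> g r1 = g r2.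
Proof.
move=> HC r1 r2 h1 h12 h2.
pose S := [set s : R | r1 <= s <= r2 /\ g s = g r1].
have S0 : S !=set0 by exists r1; rewrite /S /= lexx h12.
have Sub : ubound S r2 by move=> s [/andP[_ ?] _].
have hS : has_ubound S by exists r2.
have hs1 : r1 <= sup S by apply: ub_le_sup => //; rewrite /S /= lexx h12.
have hs2 : sup S <= r2 := ge_sup S0 Sub.
move: (ub_le_sup hS) hs1 hs2; set σ := sup S => ubS hs1 hs2.
have [e e0 He] := HC σ ltac:(apply/andP; split; lra).
have [s Ss hs] := sup_gt S0 (ltac:(rewrite -/σ; lra) : σ - e < sup S).
have ss : s <= σ := ubS s Ss.
have gs : g σ = g r1.
  by case: Ss => _ <-; rewrite He //; apply/andP; split; lra.
have [lt|ge] := ltP σ r2; last by rewrite -gs (_ : r2 = σ) //; apply/eqP; rewrite eq_le ge hs2.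
have m1 : Order.min (σ + e / 2%:R) r2 <= σ + e / 2%:R by rewrite ge_min lexx.
have m2 : Order.min (σ + e / 2%:R) r2 <= r2 by rewrite ge_min lexx orbT.
have m3 : σ < Order.min (σ + e / 2%:R) r2 by rewrite lt_min lt ltrDl divr_gt0 ?ltr0n.
move: (Order.min _ _) m1 m2 m3 => m m1 m2 m3.
have : S m.
  split; first by apply/andP; split; lra.
  by rewrite He -?gs //; apply/andP; split; lra.
move/ubS => ?; lra.
Qed.

Lemma tstarC (t : R) : Cg g t -> tstar g t = sup [set s | t <= s /\ forall r, t <= r <= s -> Cg g r].
Proof. by move=> h; rewrite /tstar asboolT. Qed.

Lemma tstarNC (t : R) : ~ Cg g t -> tstar g t = t.
Proof. by move=> h; rewrite /tstar asboolF. Qed.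

Lemma ts_C (t b : R) : Cg g t -> t <= b -> ~ Cg g b ->
  [/\ t < tstar g t, tstar g t <= b, (forall r, t <= r < tstar g t -> Cg g r),
      ~ Cg g (tstar g t) & g (tstar g t) = g t].
Proof.
move=> Ct tb Cb; rewrite tstarC //.
set S := [set s | _ ].
have Sub : ubound S b.
  move=> s [ts H]; rewrite leNgt; apply/negP => bs; apply: Cb; apply: H; lra.
have St : S t.
  by split => // r /andP[h h']; have -> : r = t by apply/eqP; rewrite eq_le h h'.
have S0 : S !=set0 by exists t.
have hS : has_ubound S by exists b.
have ubS := ub_le_sup hS.
have h1 : t <= sup S := ubS t St.
have h2 : sup S <= b := ge_sup S0 Sub.
move: ubS h1 h2; set σ := sup S => ubS h1 h2.
have HC : forall r, t <= r < σ -> Cg g r.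
  move=> r /andP[tr rs]; have [s [ts Hs] rs'] := sup_gt S0 rs.
  by apply: Hs; apply/andP; split => //; exact: ltW.
have NC : ~ Cg g σ.
  move=> [e e0 He].
  have : S (σ + e / 2%:R).
    split; first lra.
    move=> r /andP[tr rs]; have [lt|ge] := ltP r σ; first by apply: HC; rewrite tr.
    apply: (@Cg_ball σ e) => //; apply/andP; split; lra.
  move/ubS => ?; lra.
have tσ : t < σ by rewrite lt_neqAle h1 andbT; apply/eqP => E; apply: NC; rewrite -E.
split => //.
case: Ct => e e0 He.
apply: (@left_lim t σ (g t) tσ) => r /andP[tr rσ]; symmetry.
apply: (@LC (t - e) σ) => //; [|lra|lra].
move=> r' /andP[h h']; have [lt|ge] := ltP r' t.
  by apply: (@Cg_ball t e He); apply/andP; split; lra.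
by apply: HC; rewrite ge.
Qed.

Lemma TSU (t s2 : R) : t <= s2 -> (forall r, t <= r < s2 -> Cg g r) -> ~ Cg g s2 ->
  tstar g t = s2.
Proof.
move=> ts H N; have [lt|eq] := ltP t s2.
  have Ct : Cg g t by apply: H; rewrite lexx lt.
  have [h1 h2 h3 h4 h5] := @ts_C t s2 Ct ts N.
  apply/eqP; rewrite eq_le h2 /=; rewrite leNgt; apply/negP => lt2.
  by apply: h4; apply: H; rewrite lt2 ltW.
have -> : t = s2 by apply/eqP; rewrite eq_le ts eq.
by rewrite tstarNC.
Qed.

Lemma gplus_C (x : R) : ~ Dg g x -> gplus g x = g x.
Proof.
rewrite /Dg /Deltag subr_gt0 => /negP; rewrite -leNgt => h.
by apply/eqP; rewrite eq_le h gplus_ge.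
Qed.

Lemma level_le (x s : R) : Dg g x -> g s = g x -> s <= x.
Proof.
move=> D e; rewrite leNgt; apply/negP => xs.
move: D; rewrite /Dg /Deltag subr_gt0 -e => h.
by have := @gplus_le x s xs; rewrite leNgt h.
Qed.

Lemma Rlem (x eta : R) : 0 < eta -> exists2 eps : R, 0 < eps &
  forall z, x < z -> gplus g x < g z < gplus g x + eps -> Deltag g z < eta.
Proof.
move=> e0.
case: (pselect (exists y, x < y /\ gplus g x < g y < gplus g x + eta)).
  move=> [y [xy /andP[h1 h2]]]; exists (g y - gplus g x); first by rewrite subr_gt0.
  move=> z xz /andP[k1 k2].
  have zy : z < y.
    rewrite ltNge; apply/negP => yz; have := ndg _ _ yz; lra.
  have := @gplus_le z y zy; rewrite /Deltag; lra.
move=> N; exists eta => // z xz k; exfalso; apply: N; by exists z.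
Qed.

Lemma const_Cg (x y : R) : (forall r, x <= r <= y -> g r = g x) ->
  forall r, x < r < y -> Cg g r.
Proof.
move=> H r /andP[h1 h2]; exists (Order.min (r - x) (y - r)).
  by rewrite lt_min !subr_gt0 h1 h2.
have m1 : Order.min (r - x) (y - r) <= r - x by rewrite ge_min lexx.
have m2 : Order.min (r - x) (y - r) <= y - r by rewrite ge_min lexx orbT.
move: (Order.min _ _) m1 m2 => m m1 m2 q /andP[k1 k2].
by rewrite !H //; apply/andP; split; lra.
Qed.

Variables (a b : R).
Hypotheses (ab : a < b) (nNa : ~ Nminus g a) (nDa : ~ Dg g a)
  (nCb : ~ Cg g b) (nNb : ~ Nplus g b) (nDb : ~ Dg g b).

Lemma ts_I t : a <= t <= b -> [/\ t <= tstar g t, tstar g t <= b,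
  (forall r, t <= r < tstar g t -> Cg g r), ~ Cg g (tstar g t) & g (tstar g t) = g t].
Proof.
move=> /andP[ha tb]; case: (pselect (Cg g t)) => C.
  by have [h1 h2 h3 h4 h5] := @ts_C t b C tb nCb; split => //; exact: ltW.
rewrite tstarNC //; split => // r /andP[k1 k2]; exfalso; lra.
Qed.

Lemma ts_Cb t : a <= t <= b -> Cg g t -> tstar g t < b.
Proof.
move=> /andP[ha tb] C; have [h1 h2 h3 h4 h5] := @ts_C t b C tb nCb.
rewrite lt_neqAle h2 andbT; apply/eqP => E; apply: nNb; split => //.
split => //; exists t; first by rewrite -E.
by move=> r /andP[k1 k2]; apply: h3; rewrite E (ltW k1) k2.
Qed.

Lemma ts_D t : Dg g t -> tstar g t = t.
Proof. by move=> D; rewrite tstarNC //; exact: Dg_notC. Qed.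

Lemma D_b : Deltag g (tstar g b) = 0.
Proof.
rewrite tstarNC //; apply/eqP; rewrite eq_le Deltag_ge0 andbT.
by rewrite leNgt; apply/negP.
Qed.

Lemma below t s : a <= s <= b -> a <= t <= b -> g s < g t ->
  Deltag g (tstar g s) <= g t - g s.
Proof.
move=> hs ht lt; have [h1 h2 h3 h4 h5] := @ts_I _ hs.
have zt : tstar g s < t.
  rewrite ltNge; apply/negP => tz; have := ndg _ _ tz; lra.
have := @gplus_le _ _ zt; rewrite /Deltag; lra.
Qed.

Lemma above_D t s : a <= t <= b -> g t < g s -> g t + Deltag g (tstar g t) <= g s.
Proof.
move=> ht lt; have [h1 h2 h3 h4 h5] := @ts_I _ ht.
have zs : tstar g t < s.
  rewrite ltNge; apply/negP => sz; have := ndg _ _ sz; lra.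
have := @gplus_le _ _ zs; rewrite /Deltag; lra.
Qed.

Lemma above t : a <= t <= b -> Deltag g (tstar g t) = 0 ->
  forall eta, 0 < eta -> exists2 eps, 0 < eps & forall s, a <= s <= b ->
  g t < g s < g t + eps -> Deltag g (tstar g s) < eta.
Proof.
move=> ht D0 eta e0; have [h1 h2 h3 h4 h5] := @ts_I _ ht.
have [eps eps0 He] := @Rlem (tstar g t) eta e0.
have gp : gplus g (tstar g t) = g t by move: D0; rewrite /Deltag; lra.
exists eps => // s hs /andP[k1 k2]; have [l1 l2 l3 l4 l5] := @ts_I _ hs.
apply: He; last by rewrite gp l5 k1 k2.
rewrite ltNge; apply/negP => sz; have := ndg _ _ sz; lra.
Qed.

Local Notation Lv t := [set s | a <= s <= b /\ g s = g t].

Lemma supL t : a <= t <= b ->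
  [/\ t <= sup (Lv t), sup (Lv t) <= b & g (sup (Lv t)) = g t].
Proof.
move=> ht.
have L0 : Lv t !=set0 by exists t.
have Lub : ubound (Lv t) b by move=> s [/andP[_ ?] _].
have hL : has_ubound (Lv t) by exists b.
have h1 : t <= sup (Lv t) by apply: ub_le_sup.
have h2 : sup (Lv t) <= b := ge_sup L0 Lub.
split => //.
have [lt|ge] := ltP t (sup (Lv t)); last first.
  by have -> : sup (Lv t) = t by apply/eqP; rewrite eq_le ge h1.
apply: (@left_lim t) => // r /andP[k1 k2].
have [l [_ gl] rl] := sup_gt L0 k2.
have := ndg _ _ (ltW k1); have := ndg _ _ (ltW rl); lra.
Qed.

Lemma supL_D t x : a <= x <= b -> g x = g t -> Dg g x -> sup (Lv t) = x.
Proof.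
move=> hx gx D.
have L0 : Lv t !=set0 by exists x.
have Lub : ubound (Lv t) x by move=> s [_ gs]; apply: level_le => //; rewrite gs.
have hL : has_ubound (Lv t) by exists x.
by apply/eqP; rewrite eq_le ge_sup //= ub_le_sup.
Qed.

Lemma claimA2 t s : a <= t <= b -> Deltag g (tstar g t) = 0 -> a <= s <= b ->
  g s = g t -> 0 < Deltag g (tstar g s) ->
  [/\ tstar g a < t < b, Ag g a b t & ~ Hg g t].
Proof.
move=> ht D0 hs gst Ds.
have [h1 h2 h3 h4 h5] := @ts_I _ hs.
set z := tstar g s in h1 h2 h3 h4 h5 Ds.
have hz : a <= z <= b by move: hs h1 h2 => /andP[? ?] ? ?; apply/andP; split; lra.
have gz : g z = g t by rewrite h5.
have sL : sup (Lv t) = z by apply: supL_D.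
have [k1 k2 k3] := @supL _ ht.
have tz : t < z.
  rewrite lt_neqAle -sL k1 andbT; apply/eqP => E.
  by move: D0; rewrite E sL (@tstarNC z h4) => E'; move: Ds; rewrite E' ltxx.
have Ag_t : Ag g a b t by rewrite /Ag sL.
split => //.
- apply/andP; split; last by lra.
  case: (pselect (Cg g a)) => Ca.
    have [l1 l2 l3 l4 l5] := @ts_C a b Ca (ltW ab) nCb.
    rewrite ltNge; apply/negP => ta.
    have tts : tstar g t = tstar g a.
      apply: TSU; [exact: ta| |exact: l4].
      move=> r /andP[r1 r2]; apply: l3; move: ht => /andP[? ?]; apply/andP; split; lra.
    have ga : g (tstar g a) = g t.
      by move: ht => /andP[? ?]; have := ndg _ _ ta; have := ndg a t ltac:(lra); lra.
    have az : tstar g a <= z by apply: level_le; [exact: Ds|rewrite ga gz].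
    have az' : tstar g a < z.
      rewrite lt_neqAle az andbT; apply/eqP => E; move: D0; rewrite tts E => E'.
      by move: Ds; rewrite /z E' ltxx.
    apply: l4; apply: (@const_Cg a z); last by lra.
    move=> r /andP[r1 r2]; have := ndg _ _ r1; have := ndg _ _ r2; lra.
  rewrite tstarNC // ltNge; apply/negP => ta.
  have ta' : t = a by move: ht => /andP[? ?]; lra.
  apply: nNa; split => //; split => //; exists z; first by lra.
  apply: (@const_Cg a z).
  move=> r /andP[r1 r2]; have := ndg _ _ r1; have := ndg _ _ r2; rewrite -ta'; lra.
- move=> [s1 [s2 [D1 D2 HC /andP[l1 l2]]]].
  have : tstar g t = s2.
    apply: TSU => //; last exact: Dg_notC.
    by move=> r /andP[r1 r2]; apply: HC; apply/andP; split; lra.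
  by move=> E; move: D0 D2; rewrite E /Dg => ->; rewrite ltxx.
Qed.

Lemma caseB t : a <= t <= b -> 0 < Deltag g (tstar g t) ->
  ~ [/\ tstar g a < t < b, Ag g a b t & ~ Hg g t] ->
  exists2 d : R, 0 < d & forall s, a <= s <= b -> `|g t - g s| < d ->
    g s = g t /\ tstar g s = tstar g t.
Proof.
move=> ht Dt N.
have [h1 h2 h3 h4 h5] := @ts_I _ ht.
set z := tstar g t in h1 h2 h3 h4 h5 Dt *.
have hz : a <= z <= b by move: ht => /andP[? ?]; apply/andP; split; lra.
have Ag_t : Ag g a b t by rewrite /Ag (@supL_D t z).
have tb : t < b.
  rewrite lt_neqAle; move: ht => /andP[_ ->]; rewrite andbT; apply/eqP => E.
  by move: Dt; rewrite /z E D_b ltxx.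
have [/negP ta | Ht] : ~ tstar g a < t \/ Hg g t.
  case: (pselect (Hg g t)) => H; [by right| left => ta; apply: N; split => //].
  by rewrite ta tb.
- rewrite -leNgt in ta.
  case: (pselect (Cg g a)) => Ca; last first.
    move: ta; rewrite tstarNC // => ta.
    have ta' : t = a by move: ht => /andP[? ?]; lra.
    by exfalso; apply: nDa; move: Dt; rewrite /z ta' tstarNC.
  have [l1 l2 l3 l4 l5] := @ts_C a b Ca (ltW ab) nCb.
  have za : z = tstar g a.
    apply: TSU; [exact: ta| |exact: l4].
    move=> r /andP[r1 r2]; apply: l3; move: ht => /andP[? ?]; apply/andP; split; lra.
  exists (Deltag g z) => // s hs dd.
  have [gs|gs] := leP (g s) (g t); last first.
    have := @above_D t s ht gs; rewrite -/z => k.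
    by move: dd; rewrite ltr0_norm ?subr_lt0 //; lra.
  have sa : s <= tstar g a.
    rewrite leNgt; apply/negP => lt.
    have := @gplus_le _ _ lt; move: Dt; rewrite /Deltag za; rewrite -za h5; lra.
  have zs : tstar g s = z.
    rewrite za; apply: TSU; [exact: sa| |exact: l4].
    move=> r /andP[r1 r2]; apply: l3; move: hs => /andP[? ?]; apply/andP; split; lra.
  by split => //; have [_ _ _ _ <-] := @ts_I _ hs; rewrite zs h5.
- move: Ht => [s1 [s2 [D1 D2 HC /andP[k1 k2]]]].
  have zs2 : z = s2.
    apply: TSU => //; last exact: Dg_notC.
    by move=> r /andP[r1 r2]; apply: HC; apply/andP; split; lra.
  exists (Order.min (Deltag g s1) (Deltag g z)); first by rewrite lt_min D1 Dt.
  have m1 : Order.min (Deltag g s1) (Deltag g z) <= Deltag g s1 by rewrite ge_min lexx.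
  have m2 : Order.min (Deltag g s1) (Deltag g z) <= Deltag g z by rewrite ge_min lexx orbT.
  move: (Order.min _ _) m1 m2 => m m1 m2 s hs dd.
  have [ss1|s1s] := leP s s1.
    have q1 := ndg _ _ ss1; have q2 := @gplus_le _ _ k1.
    have gst : g s <= g t := ndg _ _ (ltW (le_lt_trans ss1 k1)).
    exfalso; move: dd m1; rewrite /Deltag ger0_norm ?subr_ge0 //; lra.
  have [ss2|s2s] := leP s s2; last first.
    have k := @gplus_le _ _ s2s; rewrite -zs2 in k.
    exfalso; move: dd k m2; rewrite /Deltag h5 ler0_norm; first lra.
    rewrite subr_le0; apply: ndg; lra.
  have zs : tstar g s = z.
    rewrite zs2; apply: TSU; [exact: ss2| |exact: Dg_notC].
    by move=> r /andP[r1 r2]; apply: HC; apply/andP; split; lra.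
  by split => //; have [_ _ _ _ <-] := @ts_I _ hs; rewrite zs h5.
Qed.

Lemma NEC t : tstar g a < t < b -> Ag g a b t -> ~ Hg g t ->
  forall d : R, 0 < d -> exists s, a <= s <= b /\ g t - d < g s < g t.
Proof.
move=> /andP[at1 tb] A NH d d0.
have ha : a <= tstar g a by have [] := @ts_I a ltac:(by rewrite lexx (ltW ab)).
have ht : a <= t <= b by apply/andP; split; lra.
have L0 : Lv t !=set0 by exists t.
have Llb : lbound (Lv t) a by move=> s [/andP[? _] _].
have hL : has_lbound (Lv t) by exists a.
have i1 : inf (Lv t) <= t by apply: ge_inf.
have i2 : a <= inf (Lv t) := lb_le_inf L0 Llb.
move: i1 i2 (ge_inf hL); set al := inf (Lv t) => i1 i2 glb.
have Hr : forall r, al < r <= t -> g r = g t.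
  move=> r /andP[r1 r2]; have [l [_ gl] lr] := inf_lt L0 r1.
  have := ndg _ _ (ltW lr); have := ndg _ _ r2; lra.
have gal : g al = g t.
  apply/eqP; rewrite eq_le (ndg _ _ i1) /=; rewrite leNgt; apply/negP => lt.
  apply: NH; exists al, (sup (Lv t)); split => //.
  - rewrite /Dg /Deltag subr_gt0; apply: (lt_le_trans lt).
    apply: lb_le_inf; first exact: gimg_ne.
    move=> _ [y /= ay <-]; have [yt|ty] := leP y t; first by rewrite Hr // ay yt.
    exact: ndg _ _ (ltW ty).
  - move=> r /andP[r1 r2].
    have [l1 [_ gl1] lr1] := inf_lt L0 r1.
    have [l2 [_ gl2] lr2] := sup_gt L0 r2.
    apply: (@const_Cg l1 l2) => //; last by rewrite lr1 lr2.
    move=> q /andP[q1 q2]; have := ndg _ _ q1; have := ndg _ _ q2; lra.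
  - apply/andP; split; last by have [] := @supL _ ht.
    rewrite lt_neqAle i1 andbT; apply/eqP => E; move: lt; rewrite E ltxx.
    by [].
have aal : a < al.
  rewrite lt_neqAle i2 andbT; apply/eqP => E.
  have gat : forall r, a <= r <= t -> g r = g a.
    move=> r /andP[r1 r2]; have := ndg _ _ r1; have := ndg _ _ r2; rewrite -E in gal; lra.
  case: (pselect (Cg g a)) => Ca.
    have [l1 l2 l3 l4 l5] := @ts_C a b Ca (ltW ab) nCb.
    by apply: l4; apply: (@const_Cg a t) => //; rewrite l1.
  move: at1; rewrite tstarNC // => at1.
  apply: nNa; split => //; split => //; exists t => //.
  exact: (@const_Cg a t).
have [dl dl0 Hd] := lcg al _ d0.
have m0 : 0 < Order.min dl (al - a) by rewrite lt_min dl0 subr_gt0.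
have m1 : Order.min dl (al - a) <= dl by rewrite ge_min lexx.
have m2 : Order.min dl (al - a) <= al - a by rewrite ge_min lexx orbT.
move: (Order.min _ _) m0 m1 m2 => m m0 m1 m2.
exists (al - m / 2%:R); split; first by apply/andP; split; lra.
have := Hd (al - m / 2%:R) ltac:(apply/andP; split; lra).
have gle : g (al - m / 2%:R) <= g al by apply: ndg; lra.
have gne : g (al - m / 2%:R) != g t.
  apply/eqP => E.
  have : Lv t (al - m / 2%:R) by split => //; apply/andP; split; lra.
  move/glb; lra.
rewrite ler0_norm ?subr_le0 // gal => k; apply/andP; split; first lra.
by rewrite lt_neqAle gne -gal gle.
Qed.

Lemma approach_DC t : a <= t <= b -> (Dg g t \/ Cg g t) -> forall d : R, 0 < d ->
  exists s, [/\ a <= s <= b, tstar g t < s < tstar g t + d & g s != g (tstar g t)].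
Proof.
move=> ht DC d d0.
have [h1 h2 h3 h4 h5] := @ts_I _ ht.
set z := tstar g t in h1 h2 h3 h4 h5 *.
have zb : z < b.
  case: DC => [D|C]; last exact: ts_Cb.
  rewrite /z ts_D // lt_neqAle; move: ht => /andP[_ ->]; rewrite andbT.
  by apply/eqP => E; apply: nDb; rewrite -E.
have m0 : 0 < Order.min d (b - z) by rewrite lt_min d0 subr_gt0.
have m1 : Order.min d (b - z) <= d by rewrite ge_min lexx.
have m2 : Order.min d (b - z) <= b - z by rewrite ge_min lexx orbT.
move: (Order.min _ _) m0 m1 m2 => m m0 m1 m2.
apply: contrapT => N.
have Hc : forall s, z < s < z + m -> g s = g z.
  move=> s /andP[k1 k2]; apply/eqP; apply: contraT => ne; exfalso; apply: N; exists s; split => //.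
  - by move: ht => /andP[? ?]; apply/andP; split; lra.
  - by apply/andP; split; lra.
have nD : ~ Dg g z.
  rewrite /Dg /Deltag subr_gt0 => lt.
  have := @gplus_le z (z + m / 2%:R) ltac:(lra).
  by rewrite Hc ?leNgt ?lt //; apply/andP; split; lra.
case: DC => [D|C]; first by apply: nD; rewrite /z ts_D.
have [l1 l2 l3 l4 l5] := @ts_C t b C ltac:(by case/andP: ht) nCb.
apply: h4; exists (Order.min (z - t) m); first by rewrite lt_min subr_gt0 l1 m0.
have n1 : Order.min (z - t) m <= z - t by rewrite ge_min lexx.
have n2 : Order.min (z - t) m <= m by rewrite ge_min lexx orbT.
move: (Order.min _ _) n1 n2 => n n1 n2 s /andP[k1 k2].
have [sz|zs] := leP s z; last by apply: Hc; apply/andP; split; lra.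
have := ndg _ _ sz; have := ndg t s ltac:(lra); rewrite -/z in l5; lra.
Qed.

Lemma constR_le t (c : R) : t < c -> (forall r, t < r < c -> g r = g t) -> left_end g t \/ Cg g t.
Proof.
move=> tc H; case: (pselect (Cg g t)) => C; [by right|left; split => //].
exists c => //; apply: (@const_Cg t c) => // r /andP[r1 r2].
have [rt|tr] := leP r t; first by have -> : r = t by apply/eqP; rewrite eq_le rt.
have [rc|cr] := ltP r c; first by apply: H; rewrite tr rc.
have -> : r = c by apply/eqP; rewrite eq_le r2.
apply: (@left_lim t) => //.
Qed.

Lemma constL_re t (c : R) : c < t -> (forall r, c < r < t -> g r = g t) -> right_end g t \/ Cg g t.
Proof.
move=> ct H; case: (pselect (Cg g t)) => C; [by right|left; split => //].
exists ((c + t) / 2%:R); first lra.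
apply: (@const_Cg ((c + t) / 2%:R) t).
move=> r /andP[r1 r2]; rewrite [g ((c + t) / 2%:R)]H; last by apply/andP; split; lra.
have [rt|tr] := ltP r t; first by rewrite H //; apply/andP; split; lra.
by have -> : r = t by apply/eqP; rewrite eq_le r2.
Qed.

Lemma LR_C t : left_end g t -> right_end g t -> ~ Dg g t -> Cg g t.
Proof.
move=> [_ [c tc Hc]] [_ [c' ct Hc']] nD.
pose r0 := (c' + t) / 2%:R.
have Hl : forall r, c' < r < t -> g r = g r0.
  move=> r /andP[r1 r2]; have [rr|rr] := leP r r0.
    by apply: (@LC c' t) => //; rewrite /r0; lra.
  by symmetry; apply: (@LC c' t) => //; [rewrite /r0; lra| exact: ltW].
have gt0 : g t = g r0 by apply: (@left_lim c').
have Hr : forall r, t < r < c -> g r = g t.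
  move=> r /andP[r1 r2]; apply/eqP; rewrite eq_le (ndg _ _ (ltW r1)) andbT.
  apply/ler_addgt0Pr => e e0.
  have [y ty gy] := @gplus_adh t e e0.
  rewrite gplus_C // in gy.
  have [yr|ry] := leP y r.
    have <- : g y = g r by apply: (@LC t c) => //; lra.
    exact: ltW.
  by have := ndg _ _ (ltW ry); lra.
exists (Order.min (t - c') (c - t)); first by rewrite lt_min !subr_gt0 ct tc.
have n1 : Order.min (t - c') (c - t) <= t - c' by rewrite ge_min lexx.
have n2 : Order.min (t - c') (c - t) <= c - t by rewrite ge_min lexx orbT.
move: (Order.min _ _) n1 n2 => n n1 n2 s /andP[k1 k2].
have [st|ts] := ltP s t; first by rewrite Hl ?gt0 //; apply/andP; split; lra.
have [e|ne] := eqVneq s t; first by rewrite e.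
by apply: Hr; apply/andP; split; [rewrite lt_neqAle eq_sym ne ts|lra].
Qed.

Lemma approach_N t : a <= t <= b -> ~ (Dg g t \/ Cg g t) -> forall d : R, 0 < d ->
  exists s, [/\ a <= s <= b, `|s - t| < d, g s != g t,
    (Nplus g t \/ t = a -> t < s) & (Nminus g t \/ t = b -> s < t)].
Proof.
move=> /andP[ha hb] nDC d d0.
have nD : ~ Dg g t by move=> D; apply: nDC; left.
have nC : ~ Cg g t by move=> C; apply: nDC; right.
have RS : t < b -> ~ Nminus g t -> exists s, [/\ t < s < t + d, s <= b & g s != g t].
  move=> tb nN; apply: contrapT => N.
  have tc : t < Order.min (t + d / 2%:R) b by rewrite lt_min tb andbT; lra.
  have H : forall r, t < r < Order.min (t + d / 2%:R) b -> g r = g t.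
    move=> r /andP[r1 r2]; apply/eqP; apply: contraT => ne; exfalso; apply: N; exists r; split => //.
    - by move: r2; rewrite lt_min => /andP[? ?]; apply/andP; split; lra.
    - by move: r2; rewrite lt_min => /andP[? ?]; lra.
  by case: (@constR_le t _ tc H) => [le|C]; [apply: nN|apply: nC].
have LS : a < t -> ~ Nplus g t -> exists s, [/\ t - d < s < t, a <= s & g s != g t].
  move=> at1 nN; apply: contrapT => N.
  have ct : Order.max (t - d / 2%:R) a < t by rewrite gt_max at1 andbT; lra.
  have H : forall r, Order.max (t - d / 2%:R) a < r < t -> g r = g t.
    move=> r /andP[r1 r2]; apply/eqP; apply: contraT => ne; exfalso; apply: N; exists r; split => //.
    - by move: r1; rewrite gt_max => /andP[? ?]; apply/andP; split; lra.
    - by move: r1; rewrite gt_max => /andP[? ?]; lra.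
  by case: (@constL_re t _ ct H) => [re|C]; [apply: nN|apply: nC].
have useR : t < b -> ~ Nminus g t -> exists s, [/\ a <= s <= b, `|s - t| < d, g s != g t,
    (Nplus g t \/ t = a -> t < s) & (Nminus g t \/ t = b -> s < t)].
  move=> tb nN; have [s [/andP[k1 k2] k3 k4]] := RS tb nN; exists s; split => //.
  - by apply/andP; split; lra.
  - by rewrite gtr0_norm; lra.
  - by move=> [//|E]; exfalso; lra.
have useL : a < t -> ~ Nplus g t -> exists s, [/\ a <= s <= b, `|s - t| < d, g s != g t,
    (Nplus g t \/ t = a -> t < s) & (Nminus g t \/ t = b -> s < t)].
  move=> at1 nN; have [s [/andP[k1 k2] k3 k4]] := LS at1 nN; exists s; split => //.
  - by apply/andP; split; lra.
  - by rewrite ltr0_norm; lra.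
  - by move=> [//|E]; exfalso; lra.
have [ta|at1] := leP t a.
  have E : t = a by apply/eqP; rewrite eq_le ta ha.
  by apply: useR; rewrite E.
have [bt|tb] := leP b t.
  have E : t = b by apply/eqP; rewrite eq_le bt hb.
  by apply: useL; rewrite E.
case: (pselect (Nminus g t)) => Nm; last exact: useR.
apply: useL => // Np.
have Lt := Nm.1; have Rt := Np.1.
by apply: nC; apply: LR_C.
Qed.

Variables (F : numFieldType) (emb : R -> F).
Hypotheses (embB : forall x y, emb (x - y) = emb x - emb y)
  (embN : forall x, `|emb x| = emb `|x|)
  (embM : forall x y, x < y -> emb x < emb y)
  (embP : forall e : F, 0 < e -> exists2 r : R, 0 < r & emb r <= e).

Lemma emb0 : emb 0 = 0.
Proof. by rewrite -(subrr 0) embB subrr. Qed.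

Lemma embNZ (x : R) : x != 0 -> emb x != 0.
Proof.
move=> nz; rewrite -normr_eq0 embN -emb0; apply/eqP => E.
have h : 0 < `|x| by rewrite normr_gt0.
by have := embM _ _ h; rewrite E ltxx.
Qed.

Lemma embLe x y : x <= y -> emb x <= emb y.
Proof.
rewrite le_eqVlt => /orP[/eqP->//|lt]; exact: (ltW (embM _ _ lt)).
Qed.

Definition PDC t (d s : R) := [/\ a <= s <= b, tstar g t < s < tstar g t + d & g s != g (tstar g t)].
Definition PN t (d s : R) := [/\ a <= s <= b, `|s - t| < d, g s != g t,
    (Nplus g t \/ t = a -> t < s) & (Nminus g t \/ t = b -> s < t)].
Definition Qd (u : R -> F) t s := (u s - u (tstar g t)) / emb (g s - g (tstar g t)).

Lemma monoPDC t : monoP (PDC t).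
Proof.
move=> d d' s dd [h1 /andP[h2 h3] h4]; split => //; apply/andP; split => //; lra.
Qed.

Lemma monoPN t : monoP (PN t).
Proof. by move=> d d' s dd [h1 h2 h3 h4 h5]; split => //; lra. Qed.

Lemma gd_DC u t L : (Dg g t \/ Cg g t) ->
  gderiv_at emb g a b u t L <-> limP (PDC t) (Qd u t) L.
Proof.
move=> DC; split.
  move=> [H _] e e0; have [d d0 Hd] := H DC e e0.
  by exists d => // s [h1 h2 h3]; apply: Hd.
move=> H; split=> [_ e e0|//].
by have [d d0 Hd] := H e e0; exists d => // s h1 h2 h3; apply: Hd.
Qed.

Lemma gd_N u t L : ~ (Dg g t \/ Cg g t) ->
  gderiv_at emb g a b u t L <-> limP (PN t) (Qd u t) L.
Proof.
move=> DC; have E : tstar g t = t by rewrite tstarNC // => C; apply: DC; right.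
rewrite /Qd E; split.
  move=> [_ H] e e0; have [d d0 Hd] := H DC e e0.
  by exists d => // s [h1 h2 h3 h4 h5]; apply: Hd.
move=> H; split=> [//|_ e e0].
by have [d d0 Hd] := H e e0; exists d => // s h1 h2 h3 h4 h5; apply: Hd.
Qed.

Lemma limP_ext (P : R -> R -> Prop) (h1 h2 : R -> F) L :
  (forall d s, P d s -> h1 s = h2 s) -> limP P h1 L -> limP P h2 L.
Proof.
move=> E H e e0; have [d d0 Hd] := H e e0; exists d => // s Ps.
by rewrite -(E d s Ps); apply: Hd.
Qed.

Lemma lim_gDC t : limP (PDC t) (fun s => emb (g s - g (tstar g t))) (emb (Deltag g (tstar g t))).
Proof.
move=> e e0; have [r r0 Hr] := embP _ e0.
set z := tstar g t.
have [y zy gy] := @gplus_adh z r r0.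
exists (y - z); first by rewrite subr_gt0.
move=> s [h1 /andP[h2 h3] h4]; rewrite -/z in h2 h3 h4 *.
rewrite -embB embN; apply: lt_le_trans Hr; apply: embM.
have sy : s <= y by apply: ltW; move: h3; rewrite addrC subrK.
have q1 := @gplus_le z s h2; have q2 := ndg s y sy.
rewrite /Deltag ger0_norm; lra.
Qed.

Lemma lim_gN t : ~ (Dg g t \/ Cg g t) ->
  limP (PN t) (fun s => emb (g s - g (tstar g t))) (emb (Deltag g (tstar g t))).
Proof.
move=> DC; have nD : ~ Dg g t by move=> D; apply: DC; left.
have E : tstar g t = t by rewrite tstarNC // => C; apply: DC; right.
have D0 : Deltag g t = 0 by rewrite /Deltag gplus_C // subrr.
rewrite E D0 => e e0; have [r r0 Hr] := embP _ e0.
have [y ty gy] := @gplus_adh t r r0; rewrite gplus_C // in gy.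
have [dl dl0 Hd] := lcg t _ r0.
exists (Order.min dl (y - t)); first by rewrite lt_min dl0 subr_gt0.
have m1 : Order.min dl (y - t) <= dl by rewrite ge_min lexx.
have m2 : Order.min dl (y - t) <= y - t by rewrite ge_min lexx orbT.
move: (Order.min _ _) m1 m2 => m m1 m2 s [h1 h2 h3 h4 h5].
rewrite emb0 subr0 embN; apply: lt_le_trans Hr; apply: embM.
have [st|ts] := ltP s t.
  apply: Hd; move: h2; rewrite ltr0_norm ?subr_lt0 //; move=> h2; apply/andP; split; lra.
move: h2; rewrite ger0_norm ?subr_ge0 // => h2.
have sy : s <= y by lra.
have q1 := ndg _ _ ts; have q2 := ndg s y sy; rewrite ger0_norm; lra.
Qed.

Lemma prod_rule u v t L1 L2 : a <= t <= b ->
  gderiv_at emb g a b u t L1 -> gderiv_at emb g a b v t L2 ->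
  gderiv_at emb g a b (fun s => u s * v s) t
    (L1 * (v (tstar g t) + L2 * emb (Deltag g (tstar g t))) + u (tstar g t) * L2).
Proof.
move=> ht.
have key : forall (d s : R), g s != g (tstar g t) ->
   Qd u t s * (v (tstar g t) + Qd v t s * emb (g s - g (tstar g t))) + u (tstar g t) * Qd v t s
   = Qd (fun s => u s * v s) t s.
  move=> d s ne; have nz : emb (g s - g (tstar g t)) != 0 by apply: embNZ; rewrite subr_eq0.
  rewrite /Qd; field; exact: nz.
case: (pselect (Dg g t \/ Cg g t)) => DC.
  rewrite !gd_DC // => H1 H2.
  apply: (@limP_ext (PDC t) (fun s => Qd u t s * (v (tstar g t) + Qd v t s *
     emb (g s - g (tstar g t))) + u (tstar g t) * Qd v t s)).
    by move=> d s [_ _ ne]; apply: key d s ne.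
  apply: limP_add; first exact: monoPDC.
    apply: limP_mul => //; first exact: monoPDC.
    apply: limP_add; [exact: monoPDC|exact: limP_cst|].
    by apply: limP_mul => //; [exact: monoPDC|exact: lim_gDC].
  by apply: limP_mul => //; [exact: monoPDC|exact: limP_cst].
rewrite !gd_N // => H1 H2.
have E : tstar g t = t by rewrite tstarNC // => C; apply: DC; right.
apply: (@limP_ext (PN t) (fun s => Qd u t s * (v (tstar g t) + Qd v t s *
   emb (g s - g (tstar g t))) + u (tstar g t) * Qd v t s)).
  by move=> d s [_ _ ne _ _]; apply: (key d s); rewrite E.
apply: limP_add; first exact: monoPN.
  apply: limP_mul => //; first exact: monoPN.
  apply: limP_add; [exact: monoPN|exact: limP_cst|].
  by apply: limP_mul => //; [exact: monoPN|exact: lim_gN].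
by apply: limP_mul => //; [exact: monoPN|exact: limP_cst].
Qed.

Lemma gderivE u t L : a <= t <= b -> gderiv_at emb g a b u t L -> gderiv emb g a b u t = L.
Proof.
move=> ht H; have H' := xgetI 0 H; move: H H'; rewrite /gderiv.
set L' := xget _ _.
case: (pselect (Dg g t \/ Cg g t)) => DC.
  rewrite !gd_DC // => H H'; symmetry; apply: (limP_uniq _ (@monoPDC t) H H').
  move=> d d0; have [s hs] := @approach_DC t ht DC d d0; by exists s.
rewrite !gd_N // => H H'; symmetry; apply: (limP_uniq _ (@monoPN t) H H').
move=> d d0; have [s hs] := @approach_N t ht DC d d0; by exists s.
Qed.

Lemma norm_small (x : F) : (forall e : F, 0 < e -> `|x| < e) -> x = 0.
Proof.
move=> H; apply/eqP; rewrite -normr_eq0; apply: contraT => ne.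
have e0 : 0 < `|x| by rewrite lt_neqAle eq_sym ne normr_ge0.
by have := H _ e0; rewrite ltxx.
Qed.

Lemma gcont_eq (u : R -> F) t s : gcont_at g a b u t -> a <= s <= b -> g s = g t -> u s = u t.
Proof.
move=> H hs gs; apply/eqP; rewrite -subr_eq0; apply/eqP; apply: norm_small => e e0.
have [d d0 Hd] := H e e0; rewrite distrC; apply: Hd => //.
by rewrite gs subrr normr0.
Qed.

Lemma D_le s : a <= s <= b -> Deltag g (tstar g s) <= g (b + 1) - g a.
Proof.
move=> hs; have [h1 h2 h3 h4 h5] := @ts_I _ hs.
have q1 := @gplus_le (tstar g s) (b + 1) ltac:(lra).
have q2 := ndg a (tstar g s) ltac:(move: hs => /andP[? ?]; lra).
rewrite /Deltag; lra.
Qed.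

Section Core.
Variable p : R -> F.
Hypothesis Bp : BCg g a b p.
Let k t := p t * emb (Deltag g (tstar g t)).

Lemma kbound : forall e : F, 0 < e -> exists2 r : R, 0 < r &
  forall s, a <= s <= b -> Deltag g (tstar g s) < r -> `|k s| < e.
Proof.
move=> e e0; have [[M HM] _] := Bp.
have M0 : 0 <= M by apply: le_trans (HM a _); rewrite ?normr_ge0 // lexx ltW.
have M1 : 0 < M + 1 by rewrite ltr_wpDl.
have [r r0 Hr] := embP _ (divr_gt0 e0 M1).
exists r => // s hs Ds.
rewrite /k normrM embN (ger0_norm (Deltag_ge0 _)).
have em : emb (Deltag g (tstar g s)) < emb r := embM _ _ Ds.
have eD0 : 0 <= emb (Deltag g (tstar g s)) by rewrite -emb0; apply: embLe; exact: Deltag_ge0.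
apply: (@le_lt_trans _ _ ((M + 1) * emb (Deltag g (tstar g s)))).
  by apply: ler_pM => //; apply: le_trans (HM s hs) _; rewrite lerDl.
apply: (@lt_le_trans _ _ ((M + 1) * emb r)); first by rewrite ltr_pM2l.
by rewrite mulrC -ler_pdivlMr.
Qed.

Lemma core_nec : (forall t, a <= t <= b -> gcont_at g a b k t) ->
  forall t, tstar g a < t < b -> Ag g a b t -> ~ Hg g t -> p t = 0.
Proof.
move=> Hk t ht A NH.
have ht' : a <= t <= b.
  have [] := @ts_I a ltac:(by rewrite lexx (ltW ab)); move: ht => /andP[? ?] ? _ _ _ _.
  apply/andP; split; lra.
have [l1 l2 l3] := @supL t ht'.
have Db := A; rewrite /Ag in Db.
move: l1 l2 l3 Db; set be := sup _ => l1 l2 l3 Db.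
have hbe : a <= be <= b by move: ht' => /andP[? ?]; apply/andP; split; lra.
have kbe : k be = 0.
  apply: norm_small => e e0.
  have e2 : 0 < e / 2%:R by rewrite divr_gt0 // ltr0n.
  have [d d0 Hd] := Hk be hbe _ e2.
  have [r r0 Hr] := kbound _ e2.
  have m0 : 0 < Order.min d r by rewrite lt_min d0 r0.
  have n1 : Order.min d r <= d by rewrite ge_min lexx.
  have n2 : Order.min d r <= r by rewrite ge_min lexx orbT.
  move: (Order.min _ _) m0 n1 n2 => m m0 n1 n2.
  have [s [hs /andP[s1 s2]]] := @NEC t ht A NH m m0.
  have Ds := @below t s hs ht' s2.
  have ks : `|k s| < e / 2%:R by apply: Hr => //; lra.
  have kb : `|k be - k s| < e / 2%:R by apply: Hd => //; rewrite l3 ger0_norm; lra.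
  rewrite [e](splitr e); apply: le_lt_trans (ltrD kb ks).
  by rewrite -{1}(subrK (k s) (k be)) ler_normD.
have pbe : p be = 0.
  move: kbe; rewrite /k (@ts_D be Db) => /eqP; rewrite mulf_eq0 => /orP[/eqP//|].
  move/eqP => E; exfalso.
  have nz : Deltag g be != 0 by rewrite lt0r_neq0.
  by have := @embNZ _ nz; rewrite E eqxx.
have [_ Bp2] := Bp.
by rewrite -(@gcont_eq p t be (Bp2 t ht') hbe l3).
Qed.

Lemma core_suf : (forall t, tstar g a < t < b -> Ag g a b t -> ~ Hg g t -> p t = 0) ->
  forall t, a <= t <= b -> gcont_at g a b k t.
Proof.
move=> C t ht e e0; have [[M HM] Bp2] := Bp.
have [pt|pt] := eqVneq (p t) 0.
  set B := g (b + 1) - g a.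
  have B0 : 0 <= B by apply: le_trans (@D_le _ ht); exact: Deltag_ge0.
  have eB0 : 0 <= emb B by rewrite -emb0; apply: embLe.
  have c0 : 0 < emb B + 1 by rewrite ltr_wpDl.
  have [d d0 Hd] := Bp2 t ht _ (divr_gt0 e0 c0).
  exists d => // s hs gs; have := Hd s hs gs.
  rewrite /k pt mul0r sub0r normrN sub0r normrN => ps.
  rewrite normrM embN (ger0_norm (Deltag_ge0 _)).
  have eD0 : 0 <= emb (Deltag g (tstar g s)) by rewrite -emb0; apply: embLe; exact: Deltag_ge0.
  apply: (@le_lt_trans _ _ (`|p s| * (emb B + 1))).
    apply: ler_wpM2l => //; apply: le_trans (@embLe _ _ (@D_le _ hs)) _.
    by rewrite lerDl.
  by rewrite -ltr_pdivlMr.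
have [D0|Dp] := eqVneq (Deltag g (tstar g t)) 0.
  have [r r0 Hr] := kbound _ e0.
  have [eps eps0 He] := @above t ht D0 r r0.
  exists (Order.min r eps); first by rewrite lt_min r0 eps0.
  have n1 : Order.min r eps <= r by rewrite ge_min lexx.
  have n2 : Order.min r eps <= eps by rewrite ge_min lexx orbT.
  move: (Order.min _ _) n1 n2 => m n1 n2 s hs dd.
  rewrite /k D0 emb0 mulr0 sub0r normrN.
  have [lt|gt|eq] := ltgtP (g s) (g t).
  - apply: Hr => //; have := @below t s hs ht lt.
    by move: dd; rewrite ger0_norm ?subr_ge0 ?(ltW lt) //; lra.
  - apply: Hr => //; apply: He => //.
    by move: dd; rewrite ler0_norm ?subr_le0 ?(ltW gt) //; move=> dd; apply/andP; split; lra.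
  - have Ds : Deltag g (tstar g s) = 0.
      apply/eqP; apply: contraT => ne.
      have Dsp : 0 < Deltag g (tstar g s) by rewrite lt_neqAle eq_sym ne Deltag_ge0.
      have [k1 k2 k3] := @claimA2 t s ht D0 hs eq Dsp.
      by move: pt; rewrite (C t k1 k2 k3) eqxx.
    by rewrite Ds emb0 mulr0 normr0.
have Dt : 0 < Deltag g (tstar g t) by rewrite lt_neqAle eq_sym Dp Deltag_ge0.
have N : ~ [/\ tstar g a < t < b, Ag g a b t & ~ Hg g t].
  by move=> [k1 k2 k3]; move: pt; rewrite (C t k1 k2 k3) eqxx.
have [d d0 Hd] := @caseB t ht Dt N.
exists d => // s hs dd; have [gs ts] := Hd s hs dd.
rewrite /k ts (@gcont_eq p t s (Bp2 t ht) hs gs) subrr normr0 //.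
Qed.

Lemma k_bnd : exists M : F, forall t, a <= t <= b -> `|k t| <= M.
Proof.
have [[M HM] _] := Bp.
have M0 : 0 <= M by apply: le_trans (HM a _); rewrite ?normr_ge0 // lexx ltW.
exists (M * emb (g (b + 1) - g a)) => t ht.
rewrite /k normrM embN (ger0_norm (Deltag_ge0 _)).
apply: ler_pM => //; first by rewrite -emb0; apply: embLe; exact: Deltag_ge0.
  exact: HM.
exact: embLe (@D_le _ ht).
Qed.
End Core.

Definition PG t (d s : R) := a <= s <= b /\ `|g t - g s| < d.

Lemma gcontP (u : R -> F) t : gcont_at g a b u t <-> limP (PG t) u (u t).
Proof.
split=> H e e0; have [d d0 Hd] := H e e0; exists d => //.
  by move=> s [h1 h2]; rewrite distrC; apply: Hd.
by move=> s h1 h2; rewrite distrC; apply: Hd.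
Qed.

Lemma monoPG t : monoP (PG t).
Proof. by move=> d d' s dd [h1 h2]; split => //; lra. Qed.

Lemma BCg_add (u v : R -> F) : BCg g a b u -> BCg g a b v -> BCg g a b (fun t => u t + v t).
Proof.
move=> [[M1 H1] C1] [[M2 H2] C2]; split.
  exists (M1 + M2) => t ht; apply: le_trans (ler_normD _ _) _.
  by apply: lerD; [exact: H1|exact: H2].
move=> t ht; apply/gcontP; apply: limP_add; first exact: monoPG.
  exact/gcontP/C1.
exact/gcontP/C2.
Qed.

Lemma BCg_mul (u v : R -> F) : BCg g a b u -> BCg g a b v -> BCg g a b (fun t => u t * v t).
Proof.
move=> [[M1 H1] C1] [[M2 H2] C2]; split.
  exists (M1 * M2) => t ht; rewrite normrM; apply: ler_pM => //; [exact: H1|exact: H2].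
move=> t ht; apply/gcontP; apply: limP_mul; first exact: monoPG.
  exact/gcontP/C1.
exact/gcontP/C2.
Qed.

Lemma BCg_opp (u : R -> F) : BCg g a b u -> BCg g a b (fun t => - u t).
Proof.
move=> [[M1 H1] C1]; split.
  by exists M1 => t ht; rewrite normrN; exact: H1.
move=> t ht; apply/gcontP; apply: limP_opp; exact/gcontP/C1.
Qed.

Lemma BCg_ext (u v : R -> F) : (forall t, a <= t <= b -> u t = v t) ->
  BCg g a b u -> BCg g a b v.
Proof.
move=> E [[M1 H1] C1]; split.
  by exists M1 => t ht; rewrite -E //; exact: H1.
move=> t ht e e0; have [d d0 Hd] := C1 t ht e e0; exists d => // s hs gs.
by rewrite -!E //; apply: Hd.
Qed.

Lemma gderivP (u : R -> F) t : a <= t <= b -> gdifferentiable_at emb g a b u t ->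
  gderiv_at emb g a b u t (gderiv emb g a b u t).
Proof. by move=> ht [L HL]; exact: xgetI HL. Qed.

Theorem main_gen (f1 f2 : R -> F) :
  BC1g emb g a b f1 -> BC1g emb g a b f2 ->
  (BC1g emb g a b (fun t => f1 t * f2 t) <->
   (forall t, tstar g a < t < b -> Ag g a b t -> ~ Hg g t ->
      gderiv emb g a b f1 t * gderiv emb g a b f2 t = 0)).
Proof.
move=> [B1 Df1 Bd1] [B2 Df2 Bd2].
set d1 := gderiv emb g a b f1; set d2 := gderiv emb g a b f2.
have H1 : forall t, a <= t <= b -> gderiv_at emb g a b f1 t (d1 t).
  by move=> t ht; apply: gderivP => //; exact: Df1.
have H2 : forall t, a <= t <= b -> gderiv_at emb g a b f2 t (d2 t).
  by move=> t ht; apply: gderivP => //; exact: Df2.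
have fs : forall (f : R -> F) t, BCg g a b f -> a <= t <= b -> f (tstar g t) = f t.
  move=> f t [_ Cf] ht; have [h1 h2 h3 h4 h5] := @ts_I _ ht.
  apply: (@gcont_eq f t) => //; first exact: Cf.
  by move: ht => /andP[? ?]; apply/andP; split; lra.
have HP : forall t, a <= t <= b -> gderiv_at emb g a b (fun s => f1 s * f2 s) t
    (d1 t * (f2 (tstar g t) + d2 t * emb (Deltag g (tstar g t))) + f1 (tstar g t) * d2 t).
  by move=> t ht; apply: prod_rule => //; [exact: H1|exact: H2].
have HG : forall t, a <= t <= b -> gderiv emb g a b (fun s => f1 s * f2 s) t =
    (d1 t * f2 t + f1 t * d2 t) + (d1 t * d2 t) * emb (Deltag g (tstar g t)).
  move=> t ht; rewrite (@gderivE _ t _ ht (HP t ht)) (fs f2 t B2 ht) (fs f1 t B1 ht).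
  by ring.
have BA : BCg g a b (fun t => d1 t * f2 t + f1 t * d2 t).
  by apply: BCg_add; apply: BCg_mul.
have Bp : BCg g a b (fun t => d1 t * d2 t) by apply: BCg_mul.
have Bprod : BCg g a b (fun t => f1 t * f2 t) by apply: BCg_mul.
have Dprod : forall t, a <= t <= b -> gdifferentiable_at emb g a b (fun s => f1 s * f2 s) t.
  by move=> t ht; eexists; exact: HP.
split.
  move=> [_ _ Bd] t ht A NH.
  have Bk : BCg g a b (fun t => (d1 t * d2 t) * emb (Deltag g (tstar g t))).
    apply: (@BCg_ext (fun t => gderiv emb g a b (fun s => f1 s * f2 s) t
        + - (d1 t * f2 t + f1 t * d2 t))).
      by move=> s hs; rewrite HG //; ring.
    by apply: BCg_add => //; apply: BCg_opp.
  exact: (@core_nec (fun t => d1 t * d2 t) Bp Bk.2 t ht A NH).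
move=> C; split => //.
apply: (@BCg_ext (fun t => (d1 t * f2 t + f1 t * d2 t)
   + (d1 t * d2 t) * emb (Deltag g (tstar g t)))).
  by move=> s hs; rewrite HG.
apply: BCg_add => //; split; first exact: (@k_bnd (fun t => d1 t * d2 t) Bp).
exact: (@core_suf (fun t => d1 t * d2 t) Bp C).
Qed.

End G.

End Aux.
Import Aux.

Theorem theorem5p7 (R : realType) (g : R -> R) (a b : R) :
  nondecr g -> left_cont g -> a < b ->
  ~ Nminus g a -> ~ Dg g a ->
  ~ Cg g b -> ~ Nplus g b -> ~ Dg g b ->
  (forall f1 f2 : R -> R,
     BC1g id g a b f1 -> BC1g id g a b f2 ->
     (BC1g id g a b (fun t => f1 t * f2 t) <->
      (forall t, tstar g a < t < b -> Ag g a b t -> ~ Hg g t ->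
         gderiv id g a b f1 t * gderiv id g a b f2 t = 0)))
  /\
  (forall f1 f2 : R -> R[i],
     BC1g (real_complex R) g a b f1 -> BC1g (real_complex R) g a b f2 ->
     (BC1g (real_complex R) g a b (fun t => f1 t * f2 t) <->
      (forall t, tstar g a < t < b -> Ag g a b t -> ~ Hg g t ->
         gderiv (real_complex R) g a b f1 t *
         gderiv (real_complex R) g a b f2 t = 0))).
Proof.
move=> ndg lcg ab nNa nDa nCb nNb nDb; split => f1 f2.
  apply: (@main_gen R g ndg lcg a b ab nNa nDa nCb nNb nDb R id) => //.
  by move=> e e0; exists e.
apply: (@main_gen R g ndg lcg a b ab nNa nDa nCb nNb nDb R[i] (real_complex R)).
- by move=> x y; rewrite rmorphB.
- move=> x; rewrite normc_def /=. rewrite expr0n /= addr0 sqrtr_sqr.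
  by [].
- by move=> x y; rewrite ltcR.
- move=> e; rewrite ltcE /= => /andP[/eqP Ie Re0].
  exists (complex.Re e) => //; rewrite lecE /= Ie eqxx lexx.
  by [].
Qed.
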